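(* Let $n>d$, $\mathbf X\in\mathbb R^{n\times d}$ with full column rank, $1\le k<d$, and $\mathbf y\in\mathbb R^n$ with $\mathbf y\notin\operatorname{col}(\mathbf X)$. Let $\hat{\boldsymbol\beta}_{\mathrm{OLS}}=(\mathbf X^T\mathbf X)^{-1}\mathbf X^T\mathbf y$ and let $F=\frac{(\|\mathbf y-\mathbf P_{-1:k}\mathbf y\|^2-\|\mathbf y-\mathbf P\mathbf y\|^2)/k}{\|\mathbf y-\mathbf P\mathbf y\|^2/(n-d)}$ be the $F$-test statistic for $H_{1:k}:\boldsymbol\beta_{1:k}=\mathbf 0$. Then $$F=\frac{\|\mathbf V_{1:k}^T\mathbf X_{1:k}\hat{\boldsymbol\beta}_{1:k,\mathrm{OLS}}\|^2/k}{\big(\hat\sigma_{1:k}^2-\|\mathbf V_{1:k}^T\mathbf X_{1:k}\hat{\boldsymbol\beta}_{1:k,\mathrm{OLS}}\|^2\big)/(n-d)}.$$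
   Context: $\mathbf A_i$, $\mathbf A_{1:i}$, $\mathbf A_{-1:i}$ denote the $i$-th column, first $i$ columns, and submatrix with first $i$ columns removed (similarly for vectors). $\mathbf P$ is the orthogonal projection onto the column space of $\mathbf X$, and $\mathbf P_{-1:i}$ onto that of $\mathbf X_{-1:i}$. $\mathbf V\in\mathbb R^{n\times(n-d+k)}$ has orthonormal columns spanning the orthogonal complement of the column space of $\mathbf X_{-1:k}$, with first $k$ columns $\mathbf V_i=(\mathbf I-\mathbf P_{-1:i})\mathbf X_i/\|(\mathbf I-\mathbf P_{-1:i})\mathbf X_i\|$. $\hat\sigma_{1:k}=\|(\mathbf I-\mathbf P_{-1:k})\mathbf y\|$. *)

(* Defs.v *)
From HB Require Import structures.
From mathcomp Require Import all_boot all_order all_algebra.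
From mathcomp Require Import reals.
Set Implicit Arguments. Unset Strict Implicit. Unset Printing Implicit Defensive.
Import Order.TTheory GRing.Theory Num.Theory.
Local Open Scope ring_scope.

Section Defs.
Variable R : realType.

Definition nrm2 n (v : 'cV[R]_n) : R := \sum_(i < n) v i 0 ^+ 2.
Definition nrm n (v : 'cV[R]_n) : R := Num.sqrt (nrm2 v).

Definition is_orth_proj n m (A : 'M[R]_(n, m)) (P : 'M[R]_n) : Prop :=
  P^T = P /\ P *m P = P /\ (P^T == A^T)%MS.

Lemma dropc_proof d i (j : 'I_(d - i)) : (i + j < d)%N.
Proof. by rewrite -ltn_subRL. Qed.

(* X_{-1:i}: X with its first i columns removed (paper indexing is 1-based;
   here columns are 0-based, so this keeps columns i, ..., d-1). *)
Definition dropc n d (i : nat) (X : 'M[R]_(n, d)) : 'M[R]_(n, d - i) :=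
  \matrix_(r < n, j < d - i) X r (Ordinal (dropc_proof j)).

Definition takec n d k (hk : (k <= d)%N) (X : 'M[R]_(n, d)) : 'M[R]_(n, k) :=
  \matrix_(r < n, j < k) X r (widen_ord hk j).

Definition taker d k (hk : (k <= d)%N) (b : 'cV[R]_d) : 'cV[R]_k :=
  \matrix_(j < k, c < 1) b (widen_ord hk j) c.

(* V_{1:k}: column i (0-based, = paper's column i+1) is
   (I - P_{-1:i+1}) X_{i+1} / || (I - P_{-1:i+1}) X_{i+1} ||,
   where Pm j is the orthogonal projection onto col(X_{-1:j}). *)
Definition Vmat n d k (hk : (k <= d)%N) (X : 'M[R]_(n, d))
    (Pm : nat -> 'M[R]_n) : 'M[R]_(n, k) :=
  \matrix_(r < n, i < k)
    (let w := (1%:M - Pm i.+1) *m col (widen_ord hk i) X in w r 0 / nrm w).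

End Defs.

(* Main.v *)
Require Import Defs.
From HB Require Import structures.
From mathcomp Require Import all_boot all_order all_algebra.
From mathcomp Require Import reals.
From mathcomp Require Import zify.
Import Order.TTheory GRing.Theory Num.Theory.
Local Open Scope ring_scope.

Lemma nrm2E (R : realType) n (v : 'cV[R]_n) : nrm2 v = (v^T *m v) 0 0.
Proof. by rewrite /nrm2 mxE; apply: eq_bigr => i _; rewrite !mxE expr2. Qed.

Lemma sumsq_eq0 (R : realType) n (v : 'cV[R]_n) : (v^T *m v) 0 0 = 0 -> v = 0.
Proof.
rewrite -nrm2E /nrm2 => /eqP; rewrite psumr_eq0 => [/allP H|i _]; last exact: sqr_ge0.
apply/matrixP => i j; rewrite (ord1 j) mxE.
have := H i (mem_index_enum _); by rewrite sqrf_eq0 => /eqP.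
Qed.

Lemma proj_fix (R : realType) n p (P : 'M[R]_n) (B : 'M[R]_(n, p)) :
  P^T = P -> P *m P = P -> (B^T <= P^T)%MS -> P *m B = B.
Proof.
move=> hs hi /submxP [D hD].
have -> : B = P *m D^T by rewrite -[B]trmxK hD trmx_mul trmxK.
by rewrite mulmxA hi.
Qed.

Lemma rank_one (R : realType) n (P1 P2 : 'M[R]_n) (x : 'cV[R]_n) (r1 : 'rV[R]_n) (M2 : 'M[R]_n) :
  P1^T = P1 -> P2^T = P2 -> P2 *m P2 = P2 -> P1 *m x = x -> P1 *m P2 = P2 ->
  P1 = x *m r1 + P2 *m M2 ->
  let v := x - P2 *m x in
  P1 - P2 = ((v^T *m v) 0 0)^-1 *: (v *m v^T).
Proof.
move=> s1 s2 i2 fx f2 dec v.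
have P2P1 : P2 *m P1 = P2 by rewrite -s2 -s1 -trmx_mul f2.
have i1 : P1 *m P1 = P1.
  by rewrite {2}dec mulmxDr !mulmxA fx f2 -dec.
have QP1 : (P1 - P2) *m P1 = P1 - P2 by rewrite mulmxBl i1 P2P1.
have Qx : (P1 - P2) *m x = v by rewrite mulmxBl fx.
have QP2 : (P1 - P2) *m P2 = 0 by rewrite mulmxBl f2 i2 subrr.
have Qr : P1 - P2 = v *m r1.
  by rewrite -{1}QP1 {2}dec mulmxDr !mulmxA Qx QP2 mul0mx addr0.
have Qv : (P1 - P2) *m v = v.
  by rewrite {1}/v mulmxBr Qx mulmxA QP2 mul0mx subr0.
have Qs : (P1 - P2)^T = P1 - P2 by rewrite linearB /= s1 s2.
have Qt : P1 - P2 = r1^T *m v^T by rewrite -Qs Qr trmx_mul.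
have e : r1^T *m (v^T *m v) = v by rewrite mulmxA -Qt.
have [s0|sn0] := eqVneq ((v^T *m v) 0 0) 0.
  have v0 : v = 0 by apply: sumsq_eq0.
  by rewrite Qr v0 !mul0mx scaler0.
have r1e : r1^T = ((v^T *m v) 0 0)^-1 *: v.
  have hs : v^T *m v = ((v^T *m v) 0 0)%:M by apply: mx11_scalar.
  move: sn0 e; set s := (v^T *m v) 0 0 => sn0 e.
  by rewrite -e hs mul_mx_scalar scalerA mulVf // scale1r.
by rewrite Qt r1e -scalemxAl.
Qed.

Lemma rank_one_mx (R : realType) n m1 m2 (P1 P2 : 'M[R]_n) (A1 : 'M[R]_(n, m1))
    (A2 : 'M[R]_(n, m2)) (x : 'cV[R]_n) :
  P1^T = P1 -> P1 *m P1 = P1 -> (P1^T == A1^T)%MS ->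
  P2^T = P2 -> P2 *m P2 = P2 -> (P2^T == A2^T)%MS ->
  (A2^T <= A1^T)%MS -> (x^T <= A1^T)%MS -> (A1^T <= col_mx x^T A2^T)%MS ->
  let v := x - P2 *m x in
  P1 - P2 = ((v^T *m v) 0 0)^-1 *: (v *m v^T).
Proof.
move=> s1 i1 /andP[e1 e1'] s2 i2 /andP[e2 e2'] h21 hx h1.
have fx : P1 *m x = x by apply: proj_fix => //; exact: submx_trans hx e1'.
have f2 : P1 *m P2 = P2.
  apply: proj_fix => //; apply: submx_trans e1'.
  by apply: submx_trans h21; rewrite s2; rewrite -{1}s2.
have : (P1^T <= col_mx x^T P2^T)%MS.
  apply: submx_trans e1 _; apply: submx_trans h1 _.
  by rewrite -!addsmxE addsmxS.
case/submxP => D hD.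
have dec : P1 = x *m (lsubmx D)^T + P2 *m (rsubmx D)^T.
  rewrite -[P1]trmxK hD -[D]hsubmxK mul_row_col linearD /= !trmx_mul !trmxK.
  by rewrite !row_mxKl !row_mxKr.
exact: (rank_one _ _ _ _ _ _ _ s1 s2 i2 fx f2 dec).
Qed.

Lemma row_dropc (R : realType) n d i (X : 'M[R]_(n, d)) (j : 'I_(d - i)) :
  row j (dropc i X)^T = row (Ordinal (dropc_proof j)) X^T.
Proof. by apply/rowP => c; rewrite !mxE. Qed.

Lemma row_in_dropc (R : realType) n d i (X : 'M[R]_(n, d)) (j : 'I_d) :
  (i <= j)%N -> (row j X^T <= (dropc i X)^T)%MS.
Proof.
move=> hij; have hj : (j - i < d - i)%N by have := ltn_ord j; lia.
have -> : row j X^T = row (Ordinal hj) (dropc i X)^T.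
  by rewrite row_dropc; congr row; apply: val_inj => /=; lia.
exact: row_sub.
Qed.

Lemma dropc_sub_X (R : realType) n d i (X : 'M[R]_(n, d)) :
  ((dropc i X)^T <= X^T)%MS.
Proof. by apply/row_subP => j; rewrite row_dropc row_sub. Qed.

Lemma dropcS (R : realType) n d i (X : 'M[R]_(n, d)) :
  ((dropc i.+1 X)^T <= (dropc i X)^T)%MS.
Proof. by apply/row_subP => j; rewrite row_dropc; apply: row_in_dropc => /=; lia. Qed.

Lemma col_in_dropc (R : realType) n d i (X : 'M[R]_(n, d)) (j : 'I_d) :
  (i <= j)%N -> ((col j X)^T <= (dropc i X)^T)%MS.
Proof. by rewrite tr_col; apply: row_in_dropc. Qed.

Lemma dropc_split (R : realType) n d (X : 'M[R]_(n, d)) (i : 'I_d) :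
  ((dropc i X)^T <= col_mx (col i X)^T (dropc i.+1 X)^T)%MS.
Proof.
apply/row_subP => j; rewrite row_dropc -addsmxE.
have [j0|jn0] := eqVneq (nat_of_ord j) 0%N.
  have -> : Ordinal (dropc_proof j) = i by apply: val_inj => /=; lia.
  by rewrite -tr_col addsmxSl.
apply: submx_trans (addsmxSr _ _); apply: row_in_dropc => /=.
by move: jn0; rewrite -lt0n; lia.
Qed.

Lemma dropc0 (R : realType) n d (X : 'M[R]_(n, d)) : (X^T == (dropc 0 X)^T)%MS.
Proof.
apply/andP; split; last exact: dropc_sub_X.
by apply/row_subP => j; apply: row_in_dropc.
Qed.

Lemma XtX_unit (R : realType) n d (X : 'M[R]_(n, d)) :
  \rank X = d -> X^T *m X \in unitmx.
Proof.
move=> hr; rewrite -row_free_unit /row_free.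
suff -> : \rank (X^T *m X) = \rank X^T by rewrite mxrank_tr hr.
apply/mxrank_injP; rewrite -submx0; apply/row_subP => i.
set u := row i _.
have h1 : (u <= X^T)%MS by apply: submx_trans (row_sub _ _) (capmxSl _ _).
have /sub_kermxP h2 : (u <= kermx X)%MS by apply: submx_trans (row_sub _ _) (capmxSr _ _).
case/submxP: h1 => D hD.
rewrite submx0; apply/eqP; rewrite -[u]trmxK; apply/eqP; rewrite trmx_eq0; apply/eqP.
apply: sumsq_eq0; rewrite trmxK {1}hD -mulmxA.
have -> : X^T *m u^T = 0 by rewrite -[X^T *m u^T]trmxK trmx_mul !trmxK h2 trmx0.
by rewrite mulmx0 mxE.
Qed.

Lemma nrm2_proj (R : realType) n (Q : 'M[R]_n) (y : 'cV[R]_n) :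
  Q^T = Q -> Q *m Q = Q -> nrm2 (y - Q *m y) = (y^T *m (1%:M - Q) *m y) 0 0.
Proof.
move=> hs hi; rewrite nrm2E.
have -> : y - Q *m y = (1%:M - Q) *m y by rewrite mulmxBl mul1mx.
have hQ : (1%:M - Q) *m (1%:M - Q) = 1%:M - Q.
  by rewrite mulmxBl mulmxBr !mul1mx mulmxBr mulmx1 hi subrr subr0.
by rewrite trmx_mul linearB /= trmx1 hs mulmxA -(mulmxA _ (1%:M - Q) (1%:M - Q)) hQ.
Qed.

Lemma telesc (V : zmodType) (f : nat -> V) k :
  \sum_(i < k) (f i - f i.+1) = f 0%N - f k.
Proof.
elim: k => [|k IH]; first by rewrite big_ord0 subrr.
by rewrite big_ord_recr IH /= addrA subrK.
Qed.

Lemma qform_sum (R : realType) n k (y : 'cV[R]_n) (M : 'I_k -> 'M[R]_n) :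
  (y^T *m (\sum_(i < k) M i) *m y) 0 0 = \sum_(i < k) (y^T *m M i *m y) 0 0.
Proof. by rewrite mulmx_sumr mulmx_suml summxE. Qed.

Lemma zmod3 (V : zmodType) (a b c : V) : (a - b) - (a - c) = c - b.
Proof. by rewrite opprB addrC addrA subrK. Qed.

Lemma wXbeta (R : realType) n d k (hk : (k <= d)%N) (X : 'M[R]_(n, d)) (y w : 'cV[R]_n) :
  \rank X = d ->
  (forall j : 'I_d, (k <= j)%N -> w^T *m col j X = 0) ->
  (w^T <= X^T)%MS ->
  (w^T *m (takec hk X *m taker hk (invmx (X^T *m X) *m X^T *m y))) 0 0 = (w^T *m y) 0 0.
Proof.
move=> hr h0 /submxP [D hD].
set beta := invmx (X^T *m X) *m X^T *m y.
have -> : (w^T *m y) = w^T *m X *m beta.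
  rewrite /beta hD !mulmxA -[D *m X^T *m X]mulmxA mulmxK //; exact: XtX_unit.
rewrite mulmxA !mxE (bigID (fun j : 'I_d => (j < k)%N)) /=.
rewrite [X in _ = _ + X]big1 ?addr0; last first.
  move=> j; rewrite -leqNgt => hj.
  suff -> : (w^T *m X) 0 j = 0 by rewrite mul0r.
  have := h0 j hj; move/matrixP => /(_ 0 0); rewrite !mxE => h.
  by rewrite -[RHS]h; apply: eq_bigr => r _; rewrite !mxE.
rewrite (big_ord_narrow hk); apply: eq_bigr => j _; rewrite !mxE; congr (_ * _).
by apply: eq_bigr => r _; rewrite !mxE.
Qed.

Lemma nrm2_ge0 (R : realType) n (v : 'cV[R]_n) : 0 <= nrm2 v.
Proof. by apply: sumr_ge0 => i _; apply: sqr_ge0. Qed.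

Theorem lemmaC4 (R : realType) (n d k : nat) (X : 'M[R]_(n, d)) (y : 'cV[R]_n)
    (P : 'M[R]_n) (Pm : nat -> 'M[R]_n)
    (hdn : (d < n)%N) (hrank : \rank X = d)
    (hk1 : (1 <= k)%N) (hkd : (k < d)%N)
    (hy : ~~ (y^T <= X^T)%MS)
    (hP : is_orth_proj X P)
    (hPm : forall i : nat, (1 <= i <= k)%N -> is_orth_proj (dropc i X) (Pm i)) :
  let betaOLS := invmx (X^T *m X) *m X^T *m y in
  let F := ((nrm2 (y - Pm k *m y) - nrm2 (y - P *m y)) / k%:R)
           / (nrm2 (y - P *m y) / (n - d)%:R) in
  let V := Vmat (ltnW hkd) X Pm in
  let a := nrm2 (V^T *m (takec (ltnW hkd) X *m taker (ltnW hkd) betaOLS)) in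
  let sigma := nrm ((1%:M - Pm k) *m y) in
  F = (a / k%:R) / ((sigma ^+ 2 - a) / (n - d)%:R).
Proof.
move=> betaOLS F V a sigma.
pose Pr := fun i : nat => if i is 0 then P else Pm i.
have hPr : forall i, (i <= k)%N ->
    [/\ (Pr i)^T = Pr i, Pr i *m Pr i = Pr i & ((Pr i)^T == (dropc i X)^T)%MS].
  case=> [_|i hi] /=.
    case: hP => [s [id e]]; split => //.
    move: e (dropc0 _ _ _ X) => /andP[e1 e2] /andP[e3 e4]; apply/andP; split.
      exact: submx_trans e1 e3.
    exact: submx_trans e4 e2.
  by case: (hPm i.+1 hi) => [s [id e]].
have PrK : Pr k = Pm k by rewrite /Pr; case: (k) hk1.
have key : a = nrm2 (y - Pm k *m y) - nrm2 (y - P *m y).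
  have [sP iP _] := hPr 0%N (leq0n k).
  have [sK iK _] := hPr k (leqnn k).
  rewrite PrK in sK iK.
  rewrite (nrm2_proj _ _ _ y sK iK) (nrm2_proj _ _ _ y sP iP).
  have -> : forall A B : 'M[R]_1, A 0 0 - B 0 0 = (A - B) 0 0 by move=> A B; rewrite !mxE.
  rewrite -mulmxBl -mulmxBr zmod3 -PrK -(telesc _ Pr) qform_sum.
  rewrite /a; set z := (takec _ X *m _); rewrite /nrm2; apply: eq_bigr => i _.
  set x := col (widen_ord (ltnW hkd) i) X.
  have [s1 i1 e1] := hPr i (ltnW (ltn_ord i)).
  have [s2 i2 e2] := hPr i.+1 (ltn_ord i).
  have hQ := rank_one_mx _ _ _ _ _ _ _ _ x s1 i1 e1 s2 i2 e2 (dropcS _ _ _ i X)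
    (col_in_dropc _ _ _ i X (widen_ord (ltnW hkd) i) (leqnn i))
    (dropc_split _ _ _ X (widen_ord (ltnW hkd) i)).
  rewrite hQ /=; rewrite /= in s2 i2 e2.
  set v := x - Pm i.+1 *m x.
  have hw : (1%:M - Pm i.+1) *m x = v by rewrite mulmxBl mul1mx.
  have hV : (V^T *m z) i 0 = (v^T *m z) 0 0 / nrm v.
    rewrite [LHS]mxE [(v^T *m z) 0 0]mxE mulr_suml; apply: eq_bigr => r _.
    by rewrite [V^T i r]mxE [V r i]mxE /= hw [v^T 0 r]mxE mulrAC.
  have hwz : (v^T *m z) 0 0 = (v^T *m y) 0 0.
    apply: wXbeta => //.
      move=> j hj.
      have hc : Pm i.+1 *m col j X = col j X.
        apply: proj_fix => //; apply: submx_trans (col_in_dropc _ _ _ i.+1 X j _) _.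
          exact: leq_trans (ltn_ord i) hj.
        by case/andP: e2.
      by rewrite /v linearB /= trmx_mul s2 mulmxBl -mulmxA hc subrr.
    rewrite /v linearB /= addmx_sub //; first by rewrite /x tr_col row_sub.
    rewrite eqmx_opp trmx_mul s2; apply: submx_trans (submxMl _ _) _.
    apply: submx_trans (dropc_sub_X _ _ _ i.+1 X).
    by case/andP: e2; rewrite s2.
  have hyv : (y^T *m v) 0 0 = (v^T *m y) 0 0.
    by rewrite -[y^T *m v]trmxK trmx_mul trmxK mxE.
  have hq : forall c, (y^T *m (c *: (v *m v^T)) *m y) 0 0 = c * ((v^T *m y) 0 0)^+2.
    move=> c; rewrite -scalemxAr -scalemxAl mxE; congr (_ * _).
    by rewrite mulmxA -(mulmxA (y^T *m v)) mxE big_ord1 hyv expr2.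
  rewrite hV hwz hq.
  rewrite expr_div_n /nrm sqr_sqrtr ?nrm2_ge0 // nrm2E.
  by rewrite mulrC expr2.
have hsig : sigma ^+ 2 = nrm2 (y - Pm k *m y).
  by rewrite /sigma /nrm sqr_sqrtr ?nrm2_ge0 // mulmxBl mul1mx.
by rewrite /F key hsig subKr.
Qed.
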